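(* Let $E$ be a real Hilbert space with $\dim(E)\ge2$, $h\in E$ a unit vector, and $f:\mathbb{R}_{\ge0}\to\mathbb{R}_{\ge0}$ with $f(d)=0$ iff $d=0$. Let $x\preceq_f y\iff f(\|y_\perp-x_\perp\|)\le y_h-x_h$. Then the relation $\preceq_f$ is topologically closed in $E\times E$ if and only if $f$ is lower semicontinuous.
   Context: For $x\in E$ write $x=x_h h+x_\perp$ with $x_h=(x,h)$ and $x_\perp$ orthogonal to $h$. *)

(* Defs.v *)
From HB Require Import structures.
From mathcomp Require Import all_boot all_order all_algebra.
From mathcomp Require Import all_classical all_reals all_analysis.
Set Implicit Arguments. Unset Strict Implicit. Unset Printing Implicit Defensive.
Import Order.TTheory GRing.Theory Num.Theory.
Import numFieldNormedType.Exports.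
Local Open Scope classical_set_scope.
Local Open Scope ring_scope.

(* ip is a real inner product on the normed space E inducing its norm.
   Together with completeness of E this makes E a real Hilbert space. *)
Definition is_inner_product {R : realType} {E : normedModType R}
  (ip : E -> E -> R) : Prop :=
  [/\ (forall x y, ip x y = ip y x),
      (forall (a : R) x y z, ip (a *: x + y) z = a * ip x z + ip y z)
    & (forall x, `|x| = Num.sqrt (ip x x))].

Definition dim_ge2 {R : realType} {E : normedModType R} : Prop :=
  exists u v : E, forall a b : R, a *: u + b *: v = 0 -> a = 0 /\ b = 0.

Definition comp_h {R : realType} {E : normedModType R}
  (ip : E -> E -> R) (h x : E) : R := ip x h.
Definition comp_perp {R : realType} {E : normedModType R}
  (ip : E -> E -> R) (h x : E) : E := x - (ip x h) *: h.

Definition prec_f {R : realType} {E : normedModType R}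
  (ip : E -> E -> R) (h : E) (f : R -> R) (x y : E) : Prop :=
  f `|comp_perp ip h y - comp_perp ip h x| <= comp_h ip h y - comp_h ip h x.

(* lower semicontinuity of f : R_{>=0} -> R (subspace topology on [0,oo)) *)
Definition lsc_nonneg {R : realType} (f : R -> R) : Prop :=
  forall d : R, 0 <= d -> forall t : R, t < f d ->
    \forall e \near d, 0 <= e -> t < f e.

(* Main.v *)
Require Import Defs.
From HB Require Import structures.
From mathcomp Require Import all_boot all_order all_algebra.
From mathcomp Require Import all_classical all_reals all_analysis.
From mathcomp Require Import ring lra.
Import Order.TTheory GRing.Theory Num.Theory.
Import numFieldNormedType.Exports.
Local Open Scope classical_set_scope.
Local Open Scope ring_scope.

Section Helpers.
Variables (R : realType) (E : normedModType R) (ip : E -> E -> R).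
Hypothesis Hip : is_inner_product ip.

Lemma ipD x y z : ip (x + y) z = ip x z + ip y z.
Proof. by case: Hip => _ L _; have := L 1 x y z; rewrite scale1r mul1r. Qed.

Lemma ip0l z : ip 0 z = 0.
Proof. have := ipD 0 0 z; rewrite addr0 => H; lra. Qed.

Lemma ipZ a x z : ip (a *: x) z = a * ip x z.
Proof. by case: Hip => _ L _; have := L a x 0 z; rewrite addr0 ip0l addr0. Qed.

Lemma ipN x z : ip (- x) z = - ip x z.
Proof. by rewrite -scaleN1r ipZ mulN1r. Qed.

Lemma ipB x y z : ip (x - y) z = ip x z - ip y z.
Proof. by rewrite ipD ipN. Qed.

Lemma ipC x y : ip x y = ip y x.
Proof. by case: Hip. Qed.

Lemma ipxx_ge0 x : 0 <= ip x x.
Proof.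
case: Hip => _ _ N.
rewrite leNgt; apply/negP => lt.
have : `|x| = 0 by rewrite N; apply/eqP; rewrite sqrtr_eq0 ltW.
move/normr0_eq0 => x0; move: lt; rewrite x0 ip0l ltxx //.
Qed.

Lemma normsq x : `|x| ^+ 2 = ip x x.
Proof. by case: Hip => _ _ N; rewrite N sqr_sqrtr // ipxx_ge0. Qed.

Variable h : E.
Hypothesis Hh : `|h| = 1.

Lemma iphh : ip h h = 1.
Proof. by rewrite -normsq Hh expr1n. Qed.

Lemma cs z : `|ip z h| <= `|z|.
Proof.
set c := ip z h.
have H := ipxx_ge0 (z - c *: h).
rewrite !ipB !ipZ ![ip _ (_ - _)]ipC !ipB !ipZ iphh (ipC h z) -/c -normsq in H.
have a0 : 0 <= `|z| by [].
have b0 : 0 <= `|c| by [].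
have sq : `|c| ^+ 2 = c ^+ 2 by rewrite real_normK // num_real.
nra.
Qed.

Lemma phi_cont : continuous (fun x => ip x h).
Proof.
move=> x; apply: (@cvgrPdist_lt _ _ _ (nbhs x) _ (fun y => ip y h) (ip x h)).2 => e e0.
have H : \forall y \near x, `|x - y| < e.
  by have := @cvgr_dist_lt _ _ _ (nbhs x) _ id x cvg_id e e0; apply.
apply: (filterS _ H) => y Hy /=.
rewrite -ipB; exact: le_lt_trans (cs _) Hy.
Qed.

Lemma perp_cont : continuous (comp_perp ip h).
Proof.
move=> x; rewrite /comp_perp.
apply: cvgB; first exact: cvg_id.
apply: cvgZr_tmp; exact: phi_cont.
Qed.

Lemma exists_u : @dim_ge2 R E -> exists u : E, `|u| = 1 /\ ip u h = 0.
Proof.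
move=> [u0 [v0 Hind]].
have orth x : ip (x - ip x h *: h) h = 0.
  by rewrite ipB ipZ iphh mulr1 subrr.
have mk w : w != 0 -> ip w h = 0 -> exists u : E, `|u| = 1 /\ ip u h = 0.
  move=> w0 wh; exists (`|w|^-1 *: w); split.
    by rewrite normrZ normrV ?unitfE ?normr_eq0 // normr_id mulVf // normr_eq0.
  by rewrite ipZ wh mulr0.
have [w0|w0] := eqVneq (u0 - ip u0 h *: h) 0; last exact: mk _ w0 (orth u0).
have [z0|z0] := eqVneq (v0 - ip v0 h *: h) 0; last exact: mk _ z0 (orth v0).
move/eqP: w0; rewrite subr_eq0 => /eqP eu.
move/eqP: z0; rewrite subr_eq0 => /eqP ev.
set a := ip u0 h in eu; set b := ip v0 h in ev.
have [b0 a0] : b = 0 /\ - a = 0.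
  apply: Hind; rewrite eu ev !scalerA mulrC mulNr scaleNr subrr //.
move: eu; rewrite (_ : a = 0); last by rewrite -[a]opprK a0 oppr0.
rewrite scale0r => u00.
have [] := Hind 1 0; first by rewrite u00 scaler0 scale0r addr0.
move=> /eqP; rewrite oner_eq0 //.
Qed.

Lemma perp_comp e t u : ip u h = 0 ->
  comp_perp ip h (e *: u + t *: h) = e *: u /\ comp_h ip h (e *: u + t *: h) = t.
Proof.
move=> uh; rewrite /comp_perp /comp_h ipD !ipZ uh iphh mulr0 add0r mulr1.
by split => //; rewrite addrK.
Qed.

Lemma comp0 : comp_perp ip h 0 = 0 /\ comp_h ip h 0 = 0.
Proof. by rewrite /comp_perp /comp_h ip0l scale0r subr0. Qed.

End Helpers.

Theorem mainTheorem14 (R : realType) (E : completeNormedModType R)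
  (ip : E -> E -> R) (h : E) (f : R -> R) :
  is_inner_product ip ->
  @dim_ge2 R E ->
  `|h| = 1 ->
  (forall d : R, 0 <= d -> 0 <= f d) ->
  (forall d : R, 0 <= d -> (f d = 0 <-> d = 0)) ->
  (closed [set p : E * E | prec_f ip h f p.1 p.2] <-> lsc_nonneg f).
Proof.
move=> Hip Hdim Hh fge0 f0.
set A := [set p : E * E | _].
set g := fun q : E * E => `|comp_perp ip h q.2 - comp_perp ip h q.1|.
set k := fun q : E * E => comp_h ip h q.2 - comp_h ip h q.1.
have gc : forall p, g q @[q --> p] --> g p.
  move=> p; apply: cvg_norm; apply: cvgB.
    apply: (@continuous_comp _ _ _ snd); first exact: cvg_snd.
    exact: (@perp_cont _ _ _ Hip _ Hh).
  apply: (@continuous_comp _ _ _ fst); first exact: cvg_fst.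
  exact: (@perp_cont _ _ _ Hip _ Hh).
have kc : forall p, k q @[q --> p] --> k p.
  move=> p; apply: cvgB.
    apply: (@continuous_comp _ _ _ snd); first exact: cvg_snd.
    exact: (@phi_cont _ _ _ Hip _ Hh).
  apply: (@continuous_comp _ _ _ fst); first exact: cvg_fst.
  exact: (@phi_cont _ _ _ Hip _ Hh).
split.
- move=> Acl d d0 t tlt.
  have [u [u1 uh]] := @exists_u _ _ _ Hip _ Hh Hdim.
  apply: contrapT => N.
  have : A (0, d *: u + t *: h).
    apply: Acl => B NB.
    have mc : (0 : E, e *: u + t *: h) @[e --> d] --> (0, d *: u + t *: h).
      apply: cvg_pair; first exact: cvg_cst.
      apply: cvgD; last exact: cvg_cst.
      apply: cvgZr_tmp; exact: cvg_id.
    have NB' : \forall e \near d, B (0, e *: u + t *: h) := mc _ NB.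
    apply: contrapT => Ne; apply: N.
    apply: (filterS _ NB') => e Be e0.
    rewrite ltNge; apply/negP => fe.
    apply: Ne; exists (0, e *: u + t *: h); split => //.
    rewrite /A /= /prec_f.
    have [-> ->] := @perp_comp _ _ _ Hip _ Hh e t u uh.
    have [-> ->] := @comp0 _ _ _ Hip h.
    by rewrite !subr0 normrZ u1 mulr1 ger0_norm.
  rewrite /A /= /prec_f.
  have [-> ->] := @perp_comp _ _ _ Hip _ Hh d t u uh.
  have [-> ->] := @comp0 _ _ _ Hip h.
  rewrite subr0 normrZ u1 mulr1 ger0_norm // subr0 => H.
  by move: tlt; rewrite ltNge H.
- move=> Hl p Cp.
  rewrite /A /= /prec_f -/(g p) -/(k p).
  rewrite leNgt; apply/negP => lt.
  set t := (f (g p) + k p) / 2.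
  have L := Hl (g p) (normr_ge0 _) t ltac:(rewrite /t; lra).
  have L' : \forall q \near p, 0 <= g q -> t < f (g q) := gc p _ L.
  have K : \forall q \near p, `|k p - k q| < t - k p.
    by have := @cvgr_dist_lt _ _ _ (nbhs p) _ k (k p) (kc p) (t - k p)
      ltac:(rewrite /t; lra); apply.
  have [q [Aq [Lq Kq]]] := Cp _ (filterI L' K).
  move: Aq; rewrite /A /= /prec_f -/(g q) -/(k q) => Aq.
  have := Lq (normr_ge0 _).
  have := ler_norm (k q - k p); rewrite distrC in Kq.
  lra.
Qed.
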